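(* Let $C\subseteq H$ be nonempty, closed and convex and take $B=N_C$ in Algorithm 3.1 (so $y_n=P_C(w_n-\lambda_nAw_n)$). (i) If Assumption 3.1 holds, then for every $p\in S$ and every $n$, $$\|y_n-\lambda_n(Ay_n-Aw_n)-p\|^2\le\|w_n-p\|^2-\Big(1-\frac{(\mu+\mu_n)^2\lambda_n^2}{\lambda_{n+1}^2}\Big)\|w_n-y_n\|^2 .$$ (ii) If Assumption 3.1 holds and $A$ is $r$-strongly pseudomonotone for some $r>0$, then for every $p\in S$ and every $n$, $$\|y_n-\lambda_n(Ay_n-Aw_n)-p\|^2\le\|w_n-p\|^2-\Big(1-\frac{(\mu+\mu_n)^2\lambda_n^2}{\lambda_{n+1}^2}\Big)\|w_n-y_n\|^2-2r\lambda_n\|y_n-p\|^2 .$$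
   Context: Let $H$ be a real Hilbert space, $A:H\to H$ a single-valued mapping and $B:H\to 2^H$ a set-valued mapping, and let $\Omega:=(A+B)^{-1}(0)=\{x\in H:\ 0\in Ax+Bx\}$. Algorithm 3.1 is the following iteration. Fix $x_0,x_1\in H$, $\mu\in(0,1)$, $\lambda_1>0$, real sequences $\{\alpha_n\},\{\beta_n\},\{\theta_n\}$ and nonnegative real sequences $\{\mu_n\},\{p_n\}$. For $n=1,2,\dots$ compute $w_n=x_n+\alpha_n(x_n-x_{n-1})$, $z_n=x_n+\beta_n(x_n-x_{n-1})$, $y_n=(I+\lambda_nB)^{-1}(I-\lambda_nA)w_n$, and set $\lambda_{n+1}=\min\{(\mu_n+\mu)\|w_n-y_n\|/\|Aw_n-Ay_n\|,\ \lambda_n+p_n\}$ if $Aw_n\neq Ay_n$, and $\lambda_{n+1}=\lambda_n+p_n$ otherwise. If $w_n=y_n$ the algorithm stops (then $y_n\in\Omega$). Otherwise set $x_{n+1}=(1-\theta_n)z_n+\theta_n\big(y_n-\lambda_n(Ay_n-Aw_n)\big)$ and continue. Here $I$ is the identity and $(I+\lambda B)^{-1}$ is the resolvent of $B$. Throughout, it is assumed that the algorithm does not stop, so that infinite sequences $\{x_n\},\{w_n\},\{z_n\},\{y_n\},\{\lambda_n\}$ are generated. $N_C(x)=\{z\in H:\langle z,y-x\rangle\le0\ \forall y\in C\}$ for $x\in C$ and $N_C(x)=\emptyset$ otherwise is the normal cone; $P_C$ is the metric projection onto $C$, and $(I+\lambda N_C)^{-1}=P_C$. $S$ denotes the solution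 set of the variational inequality VI$(A,C)$: find $x^*\in C$ with $\langle Ax^*,y-x^*\rangle\ge0$ for all $y\in C$. Assumption 3.1: (i) $S\neq\emptyset$; (ii) $A$ is pseudomonotone (i.e. $\langle Ax,y-x\rangle\ge0$ implies $\langle Ay,y-x\rangle\ge0$) and Lipschitz continuous on $H$, and whenever $x_n\rightharpoonup w^*$ weakly in $H$, one has $\|Aw^*\|\le\liminf_{n\to\infty}\|Ax_n\|$. $A$ is $r$-strongly pseudomonotone if $\langle Ay,x-y\rangle\ge0$ implies $\langle Ax,x-y\rangle\ge r\|x-y\|^2$ for all $x,y\in H$. *)

(* Defs.v *)
From mathcomp Require Import all_boot all_order all_algebra.
From mathcomp Require Import all_classical all_reals all_analysis.
Set Implicit Arguments. Unset Strict Implicit. Unset Printing Implicit Defensive.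
Import Order.TTheory GRing.Theory Num.Theory.
Import numFieldNormedType.Exports.
Local Open Scope classical_set_scope.
Local Open Scope ring_scope.

(* A real Hilbert space: a complete normed space V over R whose norm is
   induced by a (symmetric, bilinear) inner product [ip]. *)
Definition is_inner_product (R : realType) (V : completeNormedModType R)
  (ip : V -> V -> R) : Prop :=
  [/\ (forall x y, ip x y = ip y x),
      (forall a x y z, ip (a *: x + y) z = a * ip x z + ip y z)
    & (forall x, ip x x = `|x| ^+ 2)].

Definition is_metric_proj (R : realType) (V : completeNormedModType R)
  (C : set V) (u y : V) : Prop :=
  C y /\ forall c, C c -> `|u - y| <= `|u - c|.

Definition pseudomonotone (R : realType) (V : completeNormedModType R)
  (ip : V -> V -> R) (A : V -> V) : Prop :=
  forall x y, 0 <= ip (A x) (y - x) -> 0 <= ip (A y) (y - x).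

Definition strongly_pseudomonotone (R : realType) (V : completeNormedModType R)
  (ip : V -> V -> R) (r : R) (A : V -> V) : Prop :=
  forall x y, 0 <= ip (A y) (x - y) -> r * `|x - y| ^+ 2 <= ip (A x) (x - y).

Definition lipschitz_on_H (R : realType) (V : completeNormedModType R)
  (A : V -> V) : Prop :=
  exists L : R, 0 <= L /\ forall x y, `|A x - A y| <= L * `|x - y|.

Definition weakly_cvg (R : realType) (V : completeNormedModType R)
  (ip : V -> V -> R) (u : nat -> V) (w : V) : Prop :=
  forall z, (fun n => ip (u n) z) @ \oo --> ip w z.

Definition weak_norm_lsc (R : realType) (V : completeNormedModType R)
  (ip : V -> V -> R) (A : V -> V) : Prop :=
  forall (u : nat -> V) (w : V), weakly_cvg ip u w ->
    ((`|A w|)%:E <= limn_einf (fun n => (`|A (u n)|)%:E))%E.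

Definition VI_sol (R : realType) (V : completeNormedModType R)
  (ip : V -> V -> R) (A : V -> V) (C : set V) : set V :=
  fun p => C p /\ forall y, C y -> 0 <= ip (A p) (y - p).

Definition assumption31 (R : realType) (V : completeNormedModType R)
  (ip : V -> V -> R) (A : V -> V) (C : set V) : Prop :=
  [/\ VI_sol ip A C !=set0, pseudomonotone ip A, lipschitz_on_H A
    & weak_norm_lsc ip A].

(* Algorithm 3.1 with B = N_C (resolvent = P_C), run for n = 1, 2, ...
   without stopping (w_n <> y_n for all n >= 1). *)
Definition algorithm31 (R : realType) (V : completeNormedModType R)
  (A : V -> V) (C : set V) (mu lambda1 : R)
  (alpha beta theta mun pn : nat -> R)
  (x w z y : nat -> V) (lam : nat -> R) : Prop :=
  [/\ 0 < mu < 1, 0 < lambda1, (forall n, 0 <= mun n) /\ (forall n, 0 <= pn n),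
      lam 1%N = lambda1 &
      forall n, (0 < n)%N ->
      [/\ w n = x n + alpha n *: (x n - x n.-1) /\
          z n = x n + beta n *: (x n - x n.-1),
          is_metric_proj C (w n - lam n *: A (w n)) (y n),
          lam n.+1 = (if A (w n) != A (y n)
                      then Order.min ((mun n + mu) * `|w n - y n| / `|A (w n) - A (y n)|)
                                     (lam n + pn n)
                      else lam n + pn n),
          w n != y n &
          x n.+1 = (1 - theta n) *: z n
                   + theta n *: (y n - lam n *: (A (y n) - A (w n)))]].

(* Main.v *)
Require Import Defs.
From mathcomp Require Import all_boot all_order all_algebra.
From mathcomp Require Import all_classical all_reals all_analysis.
From mathcomp Require Import ring lra.
Import Order.TTheory GRing.Theory Num.Theory.
Import numFieldNormedType.Exports.
Local Open Scope classical_set_scope.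
Local Open Scope ring_scope.

Section IP.
Variables (R : realType) (V : completeNormedModType R) (ip : V -> V -> R).
Hypothesis Hip : is_inner_product ip.

Lemma ipC x y : ip x y = ip y x. Proof. by case: Hip. Qed.
Lemma ip_lin a x y z : ip (a *: x + y) z = a * ip x z + ip y z. Proof. by case: Hip. Qed.
Lemma ipn x : `|x| ^+ 2 = ip x x. Proof. by case: Hip. Qed.
Lemma ip0l z : ip 0 z = 0.
Proof. have := ip_lin 1 0 0 z; rewrite scaler0 addr0 mul1r => H. lra. Qed.
Lemma ipDl x y z : ip (x + y) z = ip x z + ip y z.
Proof. by rewrite -[x]scale1r ip_lin mul1r scale1r. Qed.
Lemma ipZl a x z : ip (a *: x) z = a * ip x z.
Proof. by rewrite -[a *: x]addr0 ip_lin ip0l addr0. Qed.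
Lemma ipNl x z : ip (- x) z = - ip x z.
Proof. by rewrite -scaleN1r ipZl mulN1r. Qed.
Lemma ipBl x y z : ip (x - y) z = ip x z - ip y z.
Proof. by rewrite ipDl ipNl. Qed.
Lemma ipDr x y z : ip z (x + y) = ip z x + ip z y.
Proof. by rewrite ipC ipDl !(ipC z). Qed.
Lemma ipZr a x z : ip z (a *: x) = a * ip z x.
Proof. by rewrite ipC ipZl ipC. Qed.
Lemma ipNr x z : ip z (- x) = - ip z x.
Proof. by rewrite ipC ipNl ipC. Qed.
Lemma ipBr x y z : ip z (x - y) = ip z x - ip z y.
Proof. by rewrite ipDr ipNr. Qed.

Lemma key (a d e f : V) (lam K c : R) :
  ip (d + lam *: f) (a + d) <= 0 -> c <= lam * ip (e + f) (a + d) ->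
  lam ^+ 2 * `|e| ^+ 2 <= K * `|d| ^+ 2 ->
  `|a + d - lam *: e| ^+ 2 <= `|a| ^+ 2 - (1 - K) * `|d| ^+ 2 - 2 * c.
Proof.
rewrite !ipn !(ipDl, ipDr, ipNl, ipNr, ipZl, ipZr).
rewrite ?(ipC d a) ?(ipC e a) ?(ipC f a) ?(ipC e d) ?(ipC f d) ?(ipC f e).
move=> H1 H2 H3. nra.
Qed.

Lemma proj_vi (C : set V) u y p : convex_set C -> is_metric_proj C u y -> C p ->
  ip (u - y) (p - y) <= 0.
Proof.
move=> cC [Cy Hmin] Cp; rewrite leNgt; apply/negP => Ha.
set a := ip (u - y) (p - y) in Ha *.
set b := `|p - y| ^+ 2.
have b0 : 0 <= b by rewrite /b exprn_ge0.
set t := a / (a + b).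
have t0 : 0 <= t by rewrite /t divr_ge0 // ?addr_ge0 // ltW.
have t1 : t <= 1 by rewrite /t ler_pdivrMr ?mul1r ?lerDl // ltr_wpDr.
have tp : 0 < t by rewrite /t divr_gt0 // ltr_wpDr.
have tab : t * (a + b) = a by rewrite /t mulfVK // gt_eqF // ltr_wpDr.
have Ct : C (t *: p + (1 - t) *: y).
  have := cC p y (Itv01 t0 t1) (mem_set Cp) (mem_set Cy).
  by rewrite inE.
have := Hmin _ Ct.
have -> : u - (t *: p + (1 - t) *: y) = (u - y) - t *: (p - y).
  by rewrite scalerBl scale1r scalerBr addrCA opprD addrA.
move=> Hn.
have Hn2 : `|u - y| ^+ 2 <= `|u - y - t *: (p - y)| ^+ 2.
  have := normr_ge0 (u - y). nra.
move: Hn2 tab Ha; rewrite /b /a.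
move: (u - y) (p - y) => v q.
rewrite !ipn !(ipDl, ipDr, ipNl, ipNr, ipZl, ipZr) (ipC q v).
move=> H1 H2 H3. nra.
Qed.
End IP.

Theorem proposition3p1 (R : realType) (V : completeNormedModType R)
  (ip : V -> V -> R) (A : V -> V) (C : set V)
  (mu lambda1 : R) (alpha beta theta mun pn : nat -> R)
  (x w z y : nat -> V) (lam : nat -> R) :
  is_inner_product ip ->
  C !=set0 -> closed C -> convex_set C ->
  algorithm31 A C mu lambda1 alpha beta theta mun pn x w z y lam ->
  assumption31 ip A C ->
  (forall p n, VI_sol ip A C p -> (0 < n)%N ->
     `|y n - lam n *: (A (y n) - A (w n)) - p| ^+ 2
     <= `|w n - p| ^+ 2
        - (1 - (mu + mun n) ^+ 2 * lam n ^+ 2 / lam n.+1 ^+ 2) * `|w n - y n| ^+ 2)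
  /\
  (forall r : R, 0 < r -> strongly_pseudomonotone ip r A ->
   forall p n, VI_sol ip A C p -> (0 < n)%N ->
     `|y n - lam n *: (A (y n) - A (w n)) - p| ^+ 2
     <= `|w n - p| ^+ 2
        - (1 - (mu + mun n) ^+ 2 * lam n ^+ 2 / lam n.+1 ^+ 2) * `|w n - y n| ^+ 2
        - 2 * r * lam n * `|y n - p| ^+ 2).
Proof.
move=> Hip _ _ cC [/andP[mu0 mu1] l1pos [mun0 pn0] lam1 Hstep] [_ Hpm _ _].
have lampos : forall n, (0 < n)%N -> 0 < lam n.
  case=> // n _; elim: n => [|n IH']; first by rewrite lam1.
  have [_ _ -> wy _] := Hstep n.+1 isT.
  case: ifP => HA.
    rewrite lt_min; apply/andP; split; last by have := pn0 n.+1; lra.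
    apply: divr_gt0; last by rewrite normr_gt0 subr_eq0 HA.
    apply: mulr_gt0; last by rewrite normr_gt0 subr_eq0.
    by have := mun0 n.+1; lra.
  by have := pn0 n.+1; lra.
have core : forall p n c, VI_sol ip A C p -> (0 < n)%N ->
    c <= lam n * ip (A (y n)) (y n - p) ->
    `|y n - lam n *: (A (y n) - A (w n)) - p| ^+ 2
     <= `|w n - p| ^+ 2
        - (1 - (mu + mun n) ^+ 2 * lam n ^+ 2 / lam n.+1 ^+ 2) * `|w n - y n| ^+ 2
        - 2 * c.
  move=> p n c [Cp _] n0 Hc.
  have [_ Hproj Hl wy _] := Hstep n n0.
  have ln := lampos n n0.
  have ln1 := lampos n.+1 isT.
  have ad : (w n - p) + (y n - w n) = y n - p.
    by rewrite addrC addrA subrK.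
  have -> : y n - lam n *: (A (y n) - A (w n)) - p
          = (w n - p) + (y n - w n) - lam n *: (A (y n) - A (w n)).
    by rewrite ad addrAC.
  rewrite [`|w n - y n|]distrC.
refine (@key _ _ ip Hip (w n - p) (y n - w n) (A (y n) - A (w n)) (A (w n)) (lam n) _ c _ _ _).
  - have := @proj_vi _ _ ip Hip _ _ _ _ cC Hproj Cp.
    have -> : w n - lam n *: A (w n) - y n = - (y n - w n + lam n *: A (w n)).
      by rewrite opprD opprB addrAC.
    have -> : p - y n = - (w n - p + (y n - w n)) by rewrite ad opprB.
    by rewrite (@ipNl _ _ ip Hip) (@ipNr _ _ ip Hip) opprK.
  - by rewrite subrK ad.
  - have X : lam n.+1 * `|A (y n) - A (w n)| <= (mu + mun n) * `|y n - w n|.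
      move: Hl; case: ifP => HA Hl.
        have : lam n.+1 <= (mun n + mu) * `|w n - y n| / `|A (w n) - A (y n)|.
          by rewrite Hl ge_min lexx.
        rewrite ler_pdivlMr; last by rewrite normr_gt0 subr_eq0 HA.
        by rewrite (distrC (w n)) (distrC (A (w n))) (addrC (mun n)).
      move/negbFE/eqP: HA => ->; rewrite subrr normr0 mulr0.
      by rewrite mulr_ge0 // ?addr_ge0 // ltW.
    set E := `|A (y n) - A (w n)| in X *.
    set D := `|y n - w n| in X *.
    set m := mu + mun n in X *.
    have E0 : 0 <= E by apply: normr_ge0.
    have D0 : 0 <= D by apply: normr_ge0.
    have m0 : 0 <= m by rewrite addr_ge0 // ltW.
    have h : E ^+ 2 <= m ^+ 2 * D ^+ 2 / lam n.+1 ^+ 2.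
      rewrite ler_pdivlMr ?exprn_gt0 //.
      have P : 0 <= lam n.+1 * E by rewrite mulr_ge0 // ltW.
      have Q : 0 <= (m * D - lam n.+1 * E) * (m * D + lam n.+1 * E).
        by rewrite mulr_ge0 // ?subr_ge0 // addr_ge0 // ?mulr_ge0.
      nra.
    have -> : m ^+ 2 * lam n ^+ 2 / lam n.+1 ^+ 2 * D ^+ 2
            = lam n ^+ 2 * (m ^+ 2 * D ^+ 2 / lam n.+1 ^+ 2).
      by ring.
    by rewrite ler_wpM2l // exprn_ge0 // ltW.
split.
  move=> p n Hp n0.
  have := core p n 0 Hp n0.
  rewrite mulr0 subr0; apply.
  apply: mulr_ge0; first exact/ltW/lampos.
  have [_ [Cy _] _ _ _] := Hstep n n0.
  case: Hp => Cp Hp; apply: (Hpm p (y n)); exact: Hp.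
move=> r r0 Hsp p n Hp n0.
have := core p n (r * lam n * `|y n - p| ^+ 2) Hp n0.
move=> H; suff: r * lam n * `|y n - p| ^+ 2 <= lam n * ip (A (y n)) (y n - p).
  by move/H; lra.
have [_ [Cy _] _ _ _] := Hstep n n0.
case: Hp => Cp Hp.
have := Hsp (y n) p (Hp _ Cy).
have := lampos n n0. nra.
Qed.
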